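(* Let $h:(\mathbb{R}^n,0)\to(\mathbb{R}^n,0)$ be a weak diffeomorphism. Then $h$ is an (SSP) homeomorphism, and $h$ satisfies condition semiline-(SSP).
   Context: A weak diffeomorphism is a homeomorphism germ $h:(\mathbb{R}^n,0)\to(\mathbb{R}^n,0)$ such that both $h$ and $h^{-1}$ are differentiable at $0$ (admit a linear approximation at $0$); equivalently $h(x)=M_h(x)+O_h(x)$ near $0$ with $M_h$ an invertible linear map and $\|O_h(x)\|/\|x\|\to0$ as $x\to0$, and similarly for $h^{-1}$. For a set-germ $A\subset\mathbb{R}^k$ at $0$ with $0\in\overline A$, $D(A)=\{a\in S^{k-1}:\exists\, x_i\in A\setminus\{0\},\ x_i\to0,\ x_i/\|x_i\|\to a\}$. For sequences, $\|u_m\|\ll\|v_m\|,\|w_m\|$ means $\|u_m\|/\|v_m\|\to0$ and $\|u_m\|/\|w_m\|\to0$. $A$ satisfies condition (SSP) if for every sequence $a_m\in\mathbb{R}^k$ tending to $0$ with $\lim a_m/\|a_m\|\in D(A)$ there is a sequence $b_m\in A$ with $\|a_m-b_m\|\ll\|a_m\|,\|b_m\|$. A homeomorphism germ $h$ is an (SSP) homeomorphism if its graph $\{(x,h(x))\}\subset\mathbb{R}^n\times\mathbb{R}^n$ satisfies condition (SSP) at $(0,0)$. A semiline is a set $\{ta: t\ge0\}$ with $a\in S^{n-1}$. A homeomorphism germ $h$ satisfies condition semiline-(SSP) if for every semiline $\ell$, the image $h(\ell)$ has a unique direction, i.e. $D(h(\ell))$ is a single point. *)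

(* Defs.v *)
From HB Require Import structures.
From mathcomp Require Import all_boot all_order all_algebra.
From mathcomp Require Import reals.
Set Implicit Arguments. Unset Strict Implicit. Unset Printing Implicit Defensive.
Import Order.TTheory GRing.Theory Num.Theory.
Local Open Scope ring_scope.

Section Defs.
Variable R : realType.

Definition enorm k (x : 'rV[R]_k) : R := Num.sqrt (\sum_i (x 0 i) ^+ 2).

(* x / ||x|| (equals 0 when x = 0) *)
Definition normalize k (x : 'rV[R]_k) : 'rV[R]_k := (enorm x)^-1 *: x.

Definition vcvg k (u : nat -> 'rV[R]_k) (l : 'rV[R]_k) : Prop :=
  forall e : R, 0 < e -> exists N : nat, forall m : nat, (N <= m)%N ->
    enorm (u m - l) < e.

Definition rcvg0 (r : nat -> R) : Prop :=
  forall e : R, 0 < e -> exists N : nat, forall m : nat, (N <= m)%N -> `|r m| < e.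

Definition negl k l (u : nat -> 'rV[R]_k) (v : nat -> 'rV[R]_l) : Prop :=
  rcvg0 (fun m => enorm (u m) / enorm (v m)).

Definition Dir k (A : 'rV[R]_k -> Prop) (a : 'rV[R]_k) : Prop :=
  enorm a = 1 /\
  exists x : nat -> 'rV[R]_k,
    (forall i, A (x i) /\ x i != 0) /\ vcvg x 0 /\ vcvg (fun i => normalize (x i)) a.

Definition SSP k (A : 'rV[R]_k -> Prop) : Prop :=
  forall a : nat -> 'rV[R]_k,
    vcvg a 0 ->
    (exists d, Dir A d /\ vcvg (fun m => normalize (a m)) d) ->
    exists b : nat -> 'rV[R]_k,
      (forall m, A (b m)) /\
      negl (fun m => a m - b m) a /\ negl (fun m => a m - b m) b.

Definition eopen k (U : 'rV[R]_k -> Prop) : Prop :=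
  forall x, U x -> exists r : R, 0 < r /\ forall y, enorm (y - x) < r -> U y.

Definition econt_on k l (U : 'rV[R]_k -> Prop) (f : 'rV[R]_k -> 'rV[R]_l) : Prop :=
  forall x, U x -> forall e : R, 0 < e -> exists d : R, 0 < d /\
    forall y, U y -> enorm (y - x) < d -> enorm (f y - f x) < e.

(* h : U -> V is a homeomorphism between open neighbourhoods of 0 with
   inverse g, and h 0 = 0: a representative of a homeomorphism germ
   (R^n,0) -> (R^n,0). *)
Definition homeo_germ n (U V : 'rV[R]_n -> Prop) (h g : 'rV[R]_n -> 'rV[R]_n) : Prop :=
  eopen U /\ eopen V /\ U 0 /\ V 0 /\ h 0 = 0 /\
  (forall x, U x -> V (h x) /\ g (h x) = x) /\
  (forall y, V y -> U (g y) /\ h (g y) = y) /\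
  econt_on U h /\ econt_on V g.

Definition diff_at0_inv n (U : 'rV[R]_n -> Prop) (f : 'rV[R]_n -> 'rV[R]_n) : Prop :=
  exists M : 'M[R]_n, M \in unitmx /\
    forall e : R, 0 < e -> exists d : R, 0 < d /\
      forall x, U x -> enorm x < d -> enorm (f x - x *m M) <= e * enorm x.

(* weak diffeomorphism: both h and h^{-1} differentiable at 0
   (the derivative of h at 0 is then necessarily invertible) *)
Definition weak_diffeo n (U V : 'rV[R]_n -> Prop) (h g : 'rV[R]_n -> 'rV[R]_n) : Prop :=
  homeo_germ U V h g /\ diff_at0_inv U h /\ diff_at0_inv V g.

Definition graph_on n (U : 'rV[R]_n -> Prop) (h : 'rV[R]_n -> 'rV[R]_n)
  (z : 'rV[R]_(n + n)) : Prop :=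
  exists x, U x /\ z = row_mx x (h x).

Definition semiline_image n (U : 'rV[R]_n -> Prop) (h : 'rV[R]_n -> 'rV[R]_n)
  (a : 'rV[R]_n) (y : 'rV[R]_n) : Prop :=
  exists t : R, 0 <= t /\ U (t *: a) /\ y = h (t *: a).

Definition semiline_SSP n (U : 'rV[R]_n -> Prop) (h : 'rV[R]_n -> 'rV[R]_n) : Prop :=
  forall a : 'rV[R]_n, enorm a = 1 ->
    exists d : 'rV[R]_n, forall c, Dir (semiline_image U h a) c <-> c = d.

End Defs.

(* Main.v *)
Require Import Defs.
From HB Require Import structures.
From mathcomp Require Import all_boot all_order all_algebra.
From mathcomp Require Import reals boolp.
From mathcomp Require Import ring lra.
Import Order.TTheory GRing.Theory Num.Theory.
Set Implicit Arguments. Unset Strict Implicit. Unset Printing Implicit Defensive.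
Local Open Scope ring_scope.

Section Aux.
Variable R : realType.
Implicit Types (k l : nat).

Lemma enorm_ge0 k (x : 'rV[R]_k) : 0 <= enorm x.
Proof. exact: sqrtr_ge0. Qed.

Lemma sumsq_ge0 k (x : 'rV[R]_k) : 0 <= \sum_i (x 0 i) ^+ 2.
Proof. by apply: sumr_ge0 => i _; rewrite sqr_ge0. Qed.

Lemma enorm_sq k (x : 'rV[R]_k) : enorm x ^+ 2 = \sum_i (x 0 i) ^+ 2.
Proof. by rewrite /enorm sqr_sqrtr // sumsq_ge0. Qed.

Lemma coord_le k (x : 'rV[R]_k) i : `|x 0 i| <= enorm x.
Proof.
rewrite -sqrtr_sqr /enorm ler_sqrt ?sumsq_ge0 //.
rewrite (bigD1 i) //= lerDl; apply: sumr_ge0 => j _; exact: sqr_ge0.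
Qed.

Lemma enorm0 k : enorm (0 : 'rV[R]_k) = 0.
Proof. by rewrite /enorm big1 ?sqrtr0 // => i _; rewrite mxE expr0n. Qed.

Lemma enorm_eq0 k (x : 'rV[R]_k) : enorm x = 0 -> x = 0.
Proof.
move=> H; apply/rowP => i; rewrite mxE.
have := coord_le x i; rewrite H => h.
by apply/eqP; rewrite -normr_eq0 eq_le h normr_ge0.
Qed.

Lemma enormZ k (c : R) (x : 'rV[R]_k) : enorm (c *: x) = `|c| * enorm x.
Proof.
rewrite /enorm (eq_bigr (fun i => c ^+ 2 * (x 0 i) ^+ 2)); last first.
  by move=> i _; rewrite mxE exprMn.
by rewrite -mulr_sumr sqrtrM ?sqr_ge0 // sqrtr_sqr.
Qed.

Lemma enormN k (x : 'rV[R]_k) : enorm (- x) = enorm x.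
Proof. by rewrite -scaleN1r enormZ normrN normr1 mul1r. Qed.

Lemma enormB k (x y : 'rV[R]_k) : enorm (x - y) = enorm (y - x).
Proof. by rewrite -enormN opprB. Qed.

Lemma cauchy_schwarz k (x y : 'rV[R]_k) :
  \sum_i x 0 i * y 0 i <= enorm x * enorm y.
Proof.
set A := enorm x; set B := enorm y; set D := \sum_i x 0 i * y 0 i.
have H : 0 <= \sum_i (B * x 0 i - A * y 0 i) ^+ 2.
  by apply: sumr_ge0 => i _; rewrite sqr_ge0.
have E : \sum_i (B * x 0 i - A * y 0 i) ^+ 2 =
   B ^+ 2 * \sum_i (x 0 i) ^+ 2 - 2 * A * B * D + A ^+ 2 * \sum_i (y 0 i) ^+ 2.
  rewrite /D !mulr_sumr -sumrN -!big_split /=; apply: eq_bigr => i _; ring.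
rewrite E -!enorm_sq -/A -/B in H.
have A0 : 0 <= A := enorm_ge0 x. have B0 : 0 <= B := enorm_ge0 y.
have [AB0|] := eqVneq (A * B) 0.
  rewrite AB0; move/eqP: AB0; rewrite mulf_eq0 => /orP[/eqP|/eqP] Z.
  - suff DZ : D = 0 by rewrite DZ. rewrite /D; apply: big1 => i _; by rewrite (enorm_eq0 Z) mxE mul0r.
  - suff DZ : D = 0 by rewrite DZ. rewrite /D; apply: big1 => i _; by rewrite (enorm_eq0 Z) mxE mulr0.
move=> ABn0.
have ABp : 0 < A * B by rewrite lt0r ABn0 mulr_ge0.
have : (A * B) * D <= (A * B) * (A * B) by nra.
by rewrite ler_pM2l.
Qed.

Lemma sq_le (a b : R) : 0 <= a -> 0 <= b -> a ^+ 2 <= b ^+ 2 -> a <= b.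
Proof. move=> a0 b0 h; rewrite leNgt; apply/negP => ba; move: h; nra. Qed.

Lemma enormD k (x y : 'rV[R]_k) : enorm (x + y) <= enorm x + enorm y.
Proof.
apply: sq_le; rewrite ?addr_ge0 ?enorm_ge0 //.
have E : \sum_i ((x + y) 0 i) ^+ 2 =
   \sum_i (x 0 i) ^+ 2 + 2 * \sum_i x 0 i * y 0 i + \sum_i (y 0 i) ^+ 2.
  rewrite mulr_sumr -!big_split /=; apply: eq_bigr => i _; rewrite mxE; ring.
rewrite enorm_sq E -!enorm_sq.
have := cauchy_schwarz x y. rewrite sqrrD. lra.
Qed.

Lemma enorm_sum k (I : finType) (F : I -> 'rV[R]_k) :
  enorm (\sum_i F i) <= \sum_i enorm (F i).
Proof.
apply: (big_ind2 (fun a b => enorm a <= b)) => //.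
- by rewrite enorm0.
- move=> x1 x2 y1 y2 h1 h2; apply: le_trans (enormD _ _) _; exact: lerD.
Qed.

Lemma lin_bound k l (A : 'M[R]_(k, l)) :
  exists C, 0 <= C /\ forall x, enorm (x *m A) <= C * enorm x.
Proof.
exists (\sum_i enorm (row i A)); split.
  by apply: sumr_ge0 => i _; exact: enorm_ge0.
move=> x; rewrite mulmx_sum_row mulr_suml.
apply: le_trans (enorm_sum _) _; apply: ler_sum => i _.
rewrite enormZ [X in _ <= X]mulrC ler_wpM2r ?enorm_ge0 //; exact: coord_le.
Qed.

Lemma enorm_row_mx_sq k l (x : 'rV[R]_k) (y : 'rV[R]_l) :
  enorm (row_mx x y) ^+ 2 = enorm x ^+ 2 + enorm y ^+ 2.
Proof.
rewrite !enorm_sq big_split_ord /=.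
by congr (_ + _); apply: eq_bigr => i _; rewrite ?row_mxEl ?row_mxEr.
Qed.

Lemma enorm_lsub k l (x : 'rV[R]_k) (y : 'rV[R]_l) :
  enorm x <= enorm (row_mx x y).
Proof.
apply: sq_le; rewrite ?enorm_ge0 // enorm_row_mx_sq lerDl sqr_ge0 //.
Qed.

Lemma enorm_rsub k l (x : 'rV[R]_k) (y : 'rV[R]_l) :
  enorm y <= enorm (row_mx x y).
Proof.
apply: sq_le; rewrite ?enorm_ge0 // enorm_row_mx_sq lerDr sqr_ge0 //.
Qed.

Lemma enorm_row0 k l (y : 'rV[R]_l) : enorm (row_mx (0 : 'rV[R]_k) y) = enorm y.
Proof.
have h := enorm_row_mx_sq (0 : 'rV[R]_k) y.
rewrite enorm0 expr0n add0r in h.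
by apply/eqP; rewrite -(@eqrXn2 _ 2) ?enorm_ge0 // h.
Qed.


Lemma enorm_gt0 k (x : 'rV[R]_k) : x != 0 -> 0 < enorm x.
Proof.
move=> xn0; rewrite lt0r enorm_ge0 andbT; apply/eqP => /enorm_eq0 h.
by rewrite h eqxx in xn0.
Qed.

Lemma enorm_rev k (y z : 'rV[R]_k) : `|enorm y - enorm z| <= enorm (y - z).
Proof.
have h1 : enorm y <= enorm (y - z) + enorm z.
  by rewrite -{1}(subrK z y); exact: enormD.
have h2 : enorm z <= enorm (y - z) + enorm y.
  by rewrite enormB -{1}(subrK y z); exact: enormD.
rewrite ler_norml; apply/andP; split; lra.
Qed.

Lemma normalize0 k : normalize (0 : 'rV[R]_k) = 0.
Proof. by rewrite /normalize scaler0. Qed.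

Lemma enorm_normalize k (x : 'rV[R]_k) : x != 0 -> enorm (normalize x) = 1.
Proof.
move=> xn0; have xp := enorm_gt0 xn0.
by rewrite /normalize enormZ ger0_norm ?invr_ge0 ?enorm_ge0 // mulVf // gt_eqF.
Qed.

Lemma normalizeZ k (t : R) (w : 'rV[R]_k) : 0 < t -> normalize (t *: w) = normalize w.
Proof.
move=> tp; rewrite /normalize enormZ gtr0_norm // scalerA.
have [->|wn0] := eqVneq w 0; first by rewrite !scaler0.
have wp := enorm_gt0 wn0.
by congr (_ *: _); field; rewrite !gt_eqF.
Qed.

Lemma normalize_lip k (y z : 'rV[R]_k) : z != 0 ->
  enorm (normalize y - normalize z) <= 2 * enorm (y - z) / enorm z.
Proof.
move=> zn0; have zp := enorm_gt0 zn0.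
have [->|yn0] := eqVneq y 0.
  rewrite normalize0 sub0r enormN enorm_normalize // sub0r enormN.
  by rewrite -mulrA mulfV ?gt_eqF // mulr1 ler1n.
have yp := enorm_gt0 yn0.
have E : normalize y - normalize z =
   ((enorm y)^-1 - (enorm z)^-1) *: y + (enorm z)^-1 *: (y - z).
  by rewrite /normalize scalerBl scalerBr addrA subrK.
rewrite E; apply: le_trans (enormD _ _) _.
rewrite !enormZ [`|(enorm z)^-1|]ger0_norm ?invr_ge0 ?enorm_ge0 //.
have F : `|(enorm y)^-1 - (enorm z)^-1| * enorm y = `|enorm y - enorm z| / enorm z.
  have -> : (enorm y)^-1 - (enorm z)^-1 = (enorm z - enorm y) / (enorm y * enorm z).
    by field; rewrite !gt_eqF.
  rewrite normrM distrC [`|(_ * _)^-1|]ger0_norm ?invr_ge0 ?mulr_ge0 ?enorm_ge0 //.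
  by field; rewrite !gt_eqF.
rewrite F; have := enorm_rev y z.
set a := `|_ - _|; set b := enorm (y - z); set c := enorm z => ab.
rewrite mulrC -/b; rewrite -!mulrA; have ci : 0 < c^-1 by rewrite invr_gt0.
nra.
Qed.

Lemma le_all0 (a : R) : (forall e, 0 < e -> a <= e) -> a <= 0.
Proof.
move=> H; rewrite leNgt; apply/negP => ap.
have := H (a / 2); rewrite divr_gt0 // => /(_ isT); lra.
Qed.

Definition ev (P : nat -> Prop) := exists N, forall m, (N <= m)%N -> P m.

Lemma ev_and (P Q : nat -> Prop) : ev P -> ev Q -> ev (fun m => P m /\ Q m).
Proof.
move=> [N1 H1] [N2 H2]; exists (maxn N1 N2) => m hm; split.
- by apply: H1; apply: leq_trans hm; exact: leq_maxl.
- by apply: H2; apply: leq_trans hm; exact: leq_maxr.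
Qed.

Lemma ev_mono (P Q : nat -> Prop) : (forall m, P m -> Q m) -> ev P -> ev Q.
Proof. by move=> H [N HN]; exists N => m /HN /H. Qed.

Lemma vcvg_unique k (u : nat -> 'rV[R]_k) c d : vcvg u c -> vcvg u d -> c = d.
Proof.
move=> hc hd; apply/eqP; rewrite -subr_eq0; apply/eqP; apply: enorm_eq0; apply/eqP; rewrite eq_le enorm_ge0 andbT.
apply: le_all0 => e ep.
have e2 : 0 < e / 2 by rewrite divr_gt0.
have [N1 H1] := hc _ e2; have [N2 H2] := hd _ e2.
have m1 := H1 (maxn N1 N2) (leq_maxl _ _).
have m2 := H2 (maxn N1 N2) (leq_maxr _ _).
have : enorm (c - d) <= enorm (c - u (maxn N1 N2)) + enorm (u (maxn N1 N2) - d).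
  by rewrite -{1}(subrK (u (maxn N1 N2)) c) -addrA; exact: enormD.
rewrite (enormB c (u _)); lra.
Qed.


Lemma rowP_mul n (M : 'M[R]_n) (x y : 'rV[R]_n) :
  row_mx x y *m col_mx (- M) 1%:M = y - x *m M.
Proof. by rewrite mul_row_col mulmxN mulmx1 addrC. Qed.

Definition diffest n (U : 'rV[R]_n -> Prop) (h : 'rV[R]_n -> 'rV[R]_n) (M : 'M[R]_n) :=
  forall e : R, 0 < e -> exists d : R, 0 < d /\
      forall x, U x -> enorm x < d -> enorm (h x - x *m M) <= e * enorm x.

Lemma graph_dir n (U : 'rV[R]_n -> Prop) h (M : 'M[R]_n) :
  diffest U h M ->
  forall d, Dir (graph_on U h) d -> d *m col_mx (- M) 1%:M = 0.
Proof.
move=> hd d [_ [z [zG [zc zn]]]].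
set P := col_mx (- M) 1%:M.
have [C [C0 HC]] := lin_bound P.
apply: enorm_eq0; apply/eqP; rewrite eq_le enorm_ge0 andbT.
apply: le_all0 => e ep.
have e2 : 0 < e / 2 by rewrite divr_gt0.
have [dl [dl0 Hdl]] := hd _ e2.
have k0 : 0 < e / (2 * (C + 1)) by rewrite divr_gt0 // mulr_gt0 // ltr_wpDl.
have [N1 H1] := zc _ dl0; have [N2 H2] := zn _ k0.
set m := maxn N1 N2.
have m1 := H1 m (leq_maxl _ _); have m2 := H2 m (leq_maxr _ _).
rewrite subr0 in m1.
have [[x [Ux zx]] zn0] := zG m.
have zp := enorm_gt0 zn0.
have xl : enorm x <= enorm (z m) by rewrite zx; exact: enorm_lsub.
have Hx := Hdl x Ux (le_lt_trans xl m1).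
set w := normalize (z m).
have E : d *m P = (d - w) *m P + w *m P by rewrite mulmxBl subrK.
rewrite E; apply: le_trans (enormD _ _) _.
have B1 : enorm ((d - w) *m P) <= e / 2.
  apply: le_trans (HC _) _; rewrite enormB.
  have : C * enorm (w - d) <= C * (e / (2 * (C + 1))) by rewrite ler_wpM2l // ltW.
  move=> h1; apply: le_trans h1 _.
  have -> : C * (e / (2 * (C + 1))) = (e / 2) * (C / (C + 1)) by field; rewrite gt_eqF // ltr_wpDl.
  rewrite ger_pMr // ler_pdivrMr ?ltr_wpDl // mul1r lerDl //.
have B2 : enorm (w *m P) <= e / 2.
  rewrite /w /normalize -scalemxAl enormZ ger0_norm ?invr_ge0 ?enorm_ge0 //.
  rewrite zx rowP_mul -zx.
  rewrite ler_pdivrMl //. apply: le_trans Hx _. by rewrite mulrC ler_wpM2r // ltW.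
lra.
Qed.


Lemma negl_from k (u a b : nat -> 'rV[R]_k) :
  (forall c, 0 < c -> ev (fun m => a m != 0 /\ enorm (u m) <= c * enorm (a m))) ->
  (forall m, u m = a m - b m) ->
  negl u a /\ negl u b.
Proof.
move=> H ub; split => e ep.
- have e2 : 0 < e / 2 by rewrite divr_gt0.
  have [N HN] := H _ e2; exists N => m /HN [an0 hu].
  have ap := enorm_gt0 an0.
  rewrite ger0_norm ?divr_ge0 ?enorm_ge0 // ltr_pdivrMr //.
  apply: le_lt_trans hu _; rewrite ltr_pM2r //; lra.
- set c := e / (2 * (1 + e)).
  have c0 : 0 < c by rewrite divr_gt0 // mulr_gt0 // addr_gt0.
  have ce : c * (1 + e) = e / 2 by rewrite /c; field; rewrite gt_eqF // addr_gt0.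
  have [N HN] := H _ c0; exists N => m /HN [an0 hu].
  have ap := enorm_gt0 an0.
  have hb : enorm (a m) <= enorm (u m) + enorm (b m).
    by rewrite -{1}(subrK (b m) (a m)) -ub; exact: enormD.
  have bp : 0 < enorm (b m) by nra.
  rewrite ger0_norm ?divr_ge0 ?enorm_ge0 // ltr_pdivrMr //.
  have hu0 := enorm_ge0 (u m).
  nra.
Qed.

Lemma ssp_part n (U : 'rV[R]_n -> Prop) h (M : 'M[R]_n) :
  eopen U -> U 0 -> h 0 = 0 -> diffest U h M -> SSP (graph_on U h).
Proof.
move=> oU U0 h0 hd a acv [d [Dd nd]].
have dP := graph_dir hd Dd.
set P := col_mx (- M) 1%:M.
have [r [r0 Ur]] := oU 0 U0.
pose b m := if pselect (U (lsubmx (a m))) then row_mx (lsubmx (a m)) (h (lsubmx (a m))) else 0.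
exists b.
have G : forall m, graph_on U h (b m).
  move=> m; rewrite /b; case: pselect => Ux.
    by exists (lsubmx (a m)).
  by exists 0; split => //; rewrite h0 row_mx0.
split => //; apply: negl_from => // c c0.
have [C [C0 HC]] := lin_bound P.
have c2 : 0 < c / 2 by rewrite divr_gt0.
have [dl [dl0 Hdl]] := hd _ c2.
have k0 : 0 < c / (2 * (C + 1)) by rewrite divr_gt0 // mulr_gt0 // ltr_wpDl.
have ev1 := nd _ ltr01.
have ev2 := nd _ k0.
have ev3 := acv _ dl0.
have ev4 := acv _ r0.
apply: ev_mono (ev_and (ev_and ev1 ev2) (ev_and ev3 ev4)).
move=> m [[m1 m2] [m3 m4]]; rewrite subr0 in m3 m4.
have an0 : a m != 0.
  apply/eqP => a0; rewrite a0 normalize0 sub0r enormN in m1.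
  by move: m1; rewrite Dd.1 ltxx.
split => //.
have ap := enorm_gt0 an0.
set x := lsubmx (a m); set y := rsubmx (a m).
have ax : a m = row_mx x y by rewrite hsubmxK.
have xl : enorm x <= enorm (a m) by rewrite ax; exact: enorm_lsub.
have Ux : U x by move: (Ur x); rewrite subr0; apply; apply: le_lt_trans xl m4.
have -> : a m - b m = row_mx 0 (y - h x).
  rewrite /b; destruct (pselect (U (lsubmx (a m)))) as [Ux'|nU]; last by []; rewrite /=.
  by rewrite {1}ax opp_row_mx add_row_mx subrr.
rewrite enorm_row0.
have E : y - h x = a m *m P - (h x - x *m M) by rewrite ax rowP_mul; rewrite opprB addrA subrK.
rewrite E; apply: le_trans (enormD _ _) _; rewrite enormN.
have B2 : enorm (h x - x *m M) <= c / 2 * enorm (a m).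
  apply: le_trans (Hdl x Ux (le_lt_trans xl m3)) _; apply: ler_wpM2l; [exact: ltW | exact: xl].
have B1 : enorm (a m *m P) <= c / 2 * enorm (a m).
  have -> : a m *m P = enorm (a m) *: (normalize (a m) *m P).
    by rewrite /normalize -scalemxAl scalerA mulfV ?gt_eqF // scale1r.
  rewrite enormZ ger0_norm ?enorm_ge0 // mulrC ler_wpM2r ?enorm_ge0 //.
  have -> : normalize (a m) *m P = (normalize (a m) - d) *m P by rewrite mulmxBl dP subr0.
  apply: le_trans (HC _) _.
  have : C * enorm (normalize (a m) - d) <= C * (c / (2 * (C + 1))) by apply: ler_wpM2l; [exact: C0 | exact: ltW].
  move=> h1; apply: le_trans h1 _.
  have -> : C * (c / (2 * (C + 1))) = (c / 2) * (C / (C + 1)) by field; rewrite gt_eqF // ltr_wpDl.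
  rewrite ger_pMr // ler_pdivrMr ?ltr_wpDl // mul1r lerDl //.
lra.
Qed.


Lemma tseq_cvg (r : R) : 0 < r -> forall e, 0 < e -> ev (fun m => r / (m.+2)%:R < e).
Proof.
move=> r0 e e0.
have q0 : 0 <= r / e by rewrite divr_ge0 // ltW.
have hB := archi_boundP q0.
exists (Num.Def.archi_bound (r / e)) => m hm.
have mp : 0 < (m.+2)%:R :> R by rewrite ltr0n.
rewrite ltr_pdivrMr //.
have : (Num.Def.archi_bound (r / e))%:R <= (m.+2)%:R :> R.
  by rewrite ler_nat; apply: leq_trans hm _; apply: leq_trans (leqnSn _) (leqnSn _).
move=> hle.
have : r / e < (m.+2)%:R by apply: lt_le_trans hB hle.
by rewrite ltr_pdivrMr // mulrC.
Qed.

Lemma semiline_part n (U V : 'rV[R]_n -> Prop) h g (M : 'M[R]_n) :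
  eopen U -> U 0 -> h 0 = 0 -> M \in unitmx -> diffest U h M ->
  (forall x, U x -> V (h x) /\ g (h x) = x) -> econt_on V g -> semiline_SSP U h.
Proof.
move=> oU U0 h0 Mu hd hg cg a a1.
have an0 : a != 0 by apply/eqP => a0; move: a1; rewrite a0 enorm0 => /eqP; rewrite eq_sym oner_eq0.
set w := a *m M.
have wn0 : w != 0.
  apply/eqP => w0; move/eqP: an0; apply.
  by rewrite -(mulmxK Mu a) -/w w0 mul0mx.
have wp := enorm_gt0 wn0.
have V0 : V 0 by rewrite -h0; exact: (hg 0 U0).1.
have g0 : g 0 = 0 by rewrite -{1}h0; exact: (hg 0 U0).2.
have ta : forall t, 0 <= t -> enorm (t *: a) = t.
  by move=> t t0; rewrite enormZ a1 mulr1 ger0_norm.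
have tw : forall t, (t *: a) *m M = t *: w by move=> t; rewrite -scalemxAl.
have E1 : forall e, 0 < e -> exists dl, 0 < dl /\ forall t, 0 < t -> t < dl -> U (t *: a) ->
    enorm (normalize (h (t *: a)) - normalize w) <= e.
  move=> e e0.
  have e'0 : 0 < e * enorm w / 2 by rewrite divr_gt0 // mulr_gt0.
  have [dl [dl0 Hdl]] := hd _ e'0.
  exists dl; split => // t t0 tdl Ut.
  have tl : enorm (t *: a) < dl by rewrite (ta _ (ltW t0)).
  have h1 := Hdl _ Ut tl.
  rewrite (ta _ (ltW t0)) tw in h1.
  have tn0 : t *: w != 0 by rewrite scaler_eq0 negb_or gt_eqF.
  have := normalize_lip (h (t *: a)) tn0.
  rewrite normalizeZ // enormZ gtr0_norm // => h2; apply: le_trans h2 _.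
  rewrite ler_pdivrMr ?mulr_gt0 //.
  have -> : e * (t * enorm w) = 2 * (e * enorm w / 2 * t) by field.
  by rewrite ler_pM2l.
have E2 : exists dl, 0 < dl /\ forall t, 0 < t -> t < dl -> U (t *: a) ->
    enorm (h (t *: a)) <= t * (1 + enorm w).
  have [dl [dl0 Hdl]] := hd _ ltr01.
  exists dl; split => // t t0 tdl Ut.
  have tl : enorm (t *: a) < dl by rewrite (ta _ (ltW t0)).
  have h1 := Hdl _ Ut tl.
  rewrite (ta _ (ltW t0)) tw mul1r in h1.
  have : enorm (h (t *: a)) <= enorm (h (t *: a) - t *: w) + enorm (t *: w).
    by rewrite -{1}(subrK (t *: w) (h (t *: a))); exact: enormD.
  rewrite enormZ gtr0_norm //; lra.
exists (normalize w) => c; split.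
- move=> [c1 [x [xS [xc xn]]]].
  apply: (vcvg_unique xn) => e e0.
  have e2 : 0 < e / 2 by rewrite divr_gt0.
  have [dl [dl0 Hdl]] := E1 _ e2.
  have [d' [d'0 Hd']] := cg 0 V0 _ dl0.
  have [N HN] := xc _ d'0; exists N => m /HN; rewrite subr0 => xm.
  have [[t [t0 [Ut xe]]] xn0] := xS m.
  have [Vx gx] := hg _ Ut.
  rewrite -xe in Vx gx.
  have xm' : enorm (x m - 0) < d' by rewrite subr0.
  have := Hd' _ Vx xm'.
  rewrite gx g0 subr0 ta // => tdl.
  have tp : 0 < t.
    rewrite lt0r t0 andbT; apply/eqP => tz; move: xn0; rewrite xe tz scale0r h0 eqxx //.
  have := Hdl t tp tdl Ut; rewrite -xe; lra.
- move=> ->; split; first exact: enorm_normalize.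
  have [r [r0 Ur]] := oU 0 U0.
  pose t m := r / (m.+2)%:R.
  have tp : forall m, 0 < t m by move=> m; rewrite divr_gt0 // ltr0n.
  have tr : forall m, t m < r.
    move=> m; rewrite /t ltr_pdivrMr ?ltr0n // ltr_pMr // ltr1n //.
  have Ut : forall m, U (t m *: a) by move=> m; apply: Ur; rewrite subr0 (ta _ (ltW (tp m))).
  exists (fun m => h (t m *: a)); split; [|split].
  + move=> m; split; first by exists (t m); split; [exact: ltW|split].
    apply/eqP => hz.
    have := (hg _ (Ut m)).2; rewrite hz g0 => /esym/eqP.
    by rewrite scaler_eq0 (negbTE an0) orbF gt_eqF.
  + move=> e e0.
    have [dl [dl0 Hdl]] := E2.
    have q0 : 0 < e / (1 + enorm w) by rewrite divr_gt0 // ltr_wpDr // enorm_ge0.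
    have [N HN] := ev_and (tseq_cvg r0 dl0) (tseq_cvg r0 q0).
    exists N => m /HN [m1 m2]; rewrite subr0.
    apply: le_lt_trans (Hdl _ (tp m) m1 (Ut m)) _.
    by rewrite -ltr_pdivlMr // ltr_wpDr // enorm_ge0.
  + move=> e e0.
    have e2 : 0 < e / 2 by rewrite divr_gt0.
    have [dl [dl0 Hdl]] := E1 _ e2.
    have [N HN] := tseq_cvg r0 dl0.
    exists N => m /HN m1.
    have := Hdl _ (tp m) m1 (Ut m); lra.
Qed.

End Aux.

Theorem theorem4p19 (R : realType) (n : nat)
  (U V : 'rV[R]_n -> Prop) (h g : 'rV[R]_n -> 'rV[R]_n) :
  weak_diffeo U V h g ->
  SSP (graph_on U h) /\ semiline_SSP U h.
Proof.
move=> [[oU [oV [U0 [V0 [h0 [hUV [hVU [cU cV]]]]]]]] [[M [Mu hdM]] _]].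
split.
- exact: (@ssp_part R n U h M oU U0 h0 hdM).
- exact: (@semiline_part R n U V h g M oU U0 h0 Mu hdM hUV cV).
Qed.
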